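(* Let $T$ be a binary decision tree (every internal node has exactly two children) of height $h\ge 1$ for a binary classification problem with a favorable and an unfavorable class, in which no internal node has two leaf children predicting the same class (such non-distinguishing splits having been pruned). The PAFER procedure for estimating Statistical Parity of $T$ issues one histogram query for the sensitive-attribute composition of the whole dataset plus one histogram query for each favorable decision rule of $T$, i.e. for each root-to-leaf path ending in a leaf that predicts the favorable class. Then the number $Q$ of queries issued by PAFER satisfies $2 \le Q \le 2^{h-1}+1$.
   Context: The height $h$ of a tree is the maximum number of edges on a root-to-leaf path. A decision rule of a decision tree is the conjunction of the branch conditions along a root-to-leaf path; it is favorable if the leaf it ends in predicts the favorable class. A histogram query asks a data holder, for the set of individuals satisfying a given rule, for the number of individuals in each group of the sensitive attribute. *)

(* Defs.v *)
From mathcomp Require Import all_boot.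
Set Implicit Arguments. Unset Strict Implicit. Unset Printing Implicit Defensive.

(* Internal nodes carry a
   branch condition of an arbitrary type C and have exactly two children:
   the left child is taken when the condition holds, the right one when it
   does not.  A leaf predicts a class: true = favorable, false = unfavorable. *)
Inductive dtree (C : Type) : Type :=
| Leaf of bool
| Node of C & dtree C & dtree C.
Arguments Leaf {C}.

Fixpoint height (C : Type) (t : dtree C) : nat :=
  match t with
  | Leaf _ => 0
  | Node _ l r => (maxn (height l) (height r)).+1
  end.

Fixpoint pruned (C : Type) (t : dtree C) : bool :=
  match t with
  | Leaf _ => true
  | Node _ l r =>
      [&& match l, r with
          | Leaf b1, Leaf b2 => b1 != b2
          | _, _ => true
          end, pruned l & pruned r]
  end.

(* A decision rule: the conjunction of branch conditions along a root-to-leaf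
   path, recorded as the list of (condition, outcome) pairs. *)
Definition rule (C : Type) := seq (C * bool).

Fixpoint favorable_rules (C : Type) (t : dtree C) : seq (rule C) :=
  match t with
  | Leaf b => if b then [:: [::]] else [::]
  | Node c l r =>
      map (cons (c, true)) (favorable_rules l) ++
      map (cons (c, false)) (favorable_rules r)
  end.

Inductive query (C : Type) : Type :=
| WholeData
| RuleQuery of rule C.
Arguments WholeData {C}.

Definition pafer_queries (C : Type) (t : dtree C) : seq (query C) :=
  WholeData :: map (@RuleQuery C) (favorable_rules t).

(* Main.v *)
Require Import Defs.
From mathcomp Require Import all_boot.
From mathcomp Require Import zify.

Lemma nf_leaf (C : Type) (b : bool) : size (favorable_rules (@Leaf C b)) <= 1.
Proof. by case: b. Qed.

Lemma nf_bound (C : Type) (t : dtree C) :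
  pruned t -> 1 <= height t ->
  1 <= size (favorable_rules t) <= 2 ^ (height t).-1.
Proof.
elim: t => [b|c l IHl r IHr] //= /and3P [Hlr Pl Pr] _.
rewrite size_cat !size_map.
case: l IHl Hlr Pl => [b1|c1 l1 r1] IHl Hlr Pl;
case: r IHr Hlr Pr => [b2|c2 l2 r2] IHr Hlr Pr.
- by clear IHl IHr Pl Pr; move: Hlr; case: b1; case: b2.
- have /andP [A B] := IHr Pr isT.
  have H := nf_leaf C b1.
  move: (size (favorable_rules (Leaf b1))) H => L H.
  move: (size (favorable_rules (Node c2 l2 r2))) A B => S A B.
  rewrite /= in B *. rewrite max0n /= expnS.
  have : 0 < 2 ^ maxn (height l2) (height r2) by rewrite expn_gt0.
  move: (2 ^ _) B => K B. lia.
- have /andP [A B] := IHl Pl isT.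
  have H := nf_leaf C b2.
  move: (size (favorable_rules (Leaf b2))) H => L H.
  move: (size (favorable_rules (Node c1 l1 r1))) A B => S A B.
  rewrite /= in B *. rewrite maxn0 /= expnS.
  have : 0 < 2 ^ maxn (height l1) (height r1) by rewrite expn_gt0.
  move: (2 ^ _) B => K B. lia.
- have /andP [A B] := IHl Pl isT.
  have /andP [A' B'] := IHr Pr isT.
  move: (size (favorable_rules (Node c1 l1 r1))) A B => S A B.
  move: (size (favorable_rules (Node c2 l2 r2))) A' B' => S' A' B'.
  rewrite /= in B B' *.
  move: (maxn (height l1) (height r1)) B => a B.
  move: (maxn (height l2) (height r2)) B' => b B'.
  have H1 : 2 ^ a <= 2 ^ maxn a b by rewrite leq_exp2l //; lia.
  have H2 : 2 ^ b <= 2 ^ maxn a b by rewrite leq_exp2l //; lia.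
  rewrite maxnSS /= expnS.
  move: (2 ^ a) (2 ^ b) (2 ^ maxn a b) B B' H1 H2 => x y z. lia.
Qed.

Theorem theorem1 (C : Type) (t : dtree C) :
  1 <= height t -> pruned t ->
  2 <= size (pafer_queries t) <= 2 ^ (height t).-1 + 1.
Proof.
move=> H P. rewrite /pafer_queries /= size_map.
have /andP [A B] := @nf_bound C t P H. lia.
Qed.
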